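(* Let $n\ge 5$ and let $G$ be an almost simple primitive permutation group with socle $G_0=\mathrm{PSU}_n(q)$ acting on the set $X$ of all non-degenerate $1$-dimensional subspaces of the natural module $V_n(q^2)$. Then $\mathrm{diam}(X,G)=2$.
   Context: $V_n(q^2)$ carries a non-degenerate hermitian (unitary) form $f$; a $1$-space $\langle v\rangle$ is non-degenerate iff $f(v,v)\ne 0$. An (undirected) orbital graph of $(X,G)$ is a graph on $X$ whose edge set is a single $G$-orbit on unordered $2$-subsets of $X$, and $\mathrm{diam}(X,G)$ is the maximum diameter of all such orbital graphs. *)

(* Defs.v *)
From HB Require Import structures.
From mathcomp Require Import all_boot all_order all_algebra all_fingroup all_solvable.
Set Implicit Arguments. Unset Strict Implicit. Unset Printing Implicit Defensive.
Import GRing.Theory.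
Local Open Scope ring_scope.

Section Unitary.
Variables (p k : nat) (F : finFieldType) (n : nat).

(* q = p^k ; F is meant to be the field of order q^2 *)
Definition qq : nat := (p ^ k)%N.

Definition herm (u v : 'rV[F]_n) : F := \sum_(i < n) u 0 i * (v 0 i) ^+ qq.

Definition span1 (v : 'rV[F]_n) : {set 'rV[F]_n} := [set a *: v | a : F].

Definition Xset : {set {set 'rV[F]_n}} :=
  [set span1 v | v : 'rV[F]_n & herm v v != 0].

Definition slmap (A : 'M[F]_n) (i : nat) (v : 'rV[F]_n) : 'rV[F]_n :=
  map_mx (fun a => a ^+ (p ^ i)) v *m A.

(* (A, x |-> x^(p^i)) is a semisimilarity of the form: an element of GammaU_n(q) *)
Definition semisim (A : 'M[F]_n) (i : nat) : Prop :=
  A \in unitmx /\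
  exists2 lam : F, lam != 0 &
    forall u v, herm (slmap A i u) (slmap A i v) = lam * (herm u v) ^+ (p ^ i).

Definition inSU (A : 'M[F]_n) : Prop :=
  (forall u v, herm (u *m A) (v *m A) = herm u v) /\ \det A = 1.

End Unitary.

Notation Pt p k F n := {x : {set 'rV[F]_n} | x \in Xset p k F n}.

Section Orbital.
Variable T : finType.

Definition within (E : rel T) (d : nat) (u v : T) : Prop :=
  exists s : seq T, (size s <= d)%N /\ path E u s /\ last u s = v.

Definition diam_le (E : rel T) (d : nat) : Prop := forall u v, within E d u v.

Definition orbital (G : {group {perm T}}) (x y : T) : rel T :=
  fun u v => [set u; v] \in orbit ('P^*)%act G [set x; y].

(* diam(X,G) = d (for d >= 1): the maximum diameter of orbital graphs is d *)
Definition diamXG_eq (G : {group {perm T}}) (d : nat) : Prop :=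
  (forall x y : T, x != y -> diam_le (orbital G x y) d) /\
  (exists x y : T, x != y /\ ~ diam_le (orbital G x y) d.-1).

End Orbital.

(* Main.v *)
Require Import Defs.
From HB Require Import structures.
From mathcomp Require Import all_boot all_order all_algebra all_fingroup all_solvable all_field.
From mathcomp Require Import ring zify.
Set Implicit Arguments. Unset Strict Implicit. Unset Printing Implicit Defensive.
Import GRing.Theory.
Local Open Scope ring_scope.

Section Field.
Variables (p k : nat) (F : finFieldType) (n : nat).
Hypotheses (hp : prime p) (hk : (0 < k)%N) (hF : #|F| = ((p ^ k) ^ 2)%N).

Local Notation q := (qq p k).

Lemma charF : p \in [pchar F].
Proof. by apply: (@card_finPcharP _ p (k * 2)); rewrite // hF expnM. Qed.

Lemma q_gt1 : (1 < q)%N.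
Proof.
rewrite /qq; have p1 := prime_gt1 hp.
by rewrite -[1%N](exp1n k) ltn_exp2r.
Qed.

Definition sig (x : F) := x ^+ q.

Lemma sigD x y : sig (x + y) = sig x + sig y.
Proof.
apply: exprDn_pchar; rewrite (eq_pnat _ (pcharf_eq charF)) /qq pnatX pnat_id //.
Qed.

Lemma sig0 : sig 0 = 0. Proof. by rewrite /sig expr0n; have := q_gt1; case: (q). Qed.
Lemma sig1 : sig 1 = 1. Proof. by rewrite /sig expr1n. Qed.
Lemma sigM x y : sig (x * y) = sig x * sig y. Proof. by rewrite /sig exprMn. Qed.

Lemma sig_nmod : nmod_morphism sig.
Proof. by split; [exact: sig0 | exact: sigD]. Qed.
Lemma sig_monoid : monoid_morphism sig.
Proof. by split; [exact: sig1 | exact: sigM]. Qed.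
HB.instance Definition _ := GRing.isNmodMorphism.Build F F sig sig_nmod.
HB.instance Definition _ := GRing.isMonoidMorphism.Build F F sig sig_monoid.

Lemma sigK x : sig (sig x) = x.
Proof. by rewrite /sig -exprM mulnn -hF expf_card. Qed.

Lemma sigN x : sig (- x) = - sig x. Proof. exact: rmorphN. Qed.
Lemma sigB x y : sig (x - y) = sig x - sig y. Proof. exact: rmorphB. Qed.
Lemma sigV x : sig (x^-1) = (sig x)^-1. Proof. exact: fmorphV. Qed.
Lemma sig_eq0 x : (sig x == 0) = (x == 0).
Proof. by rewrite /sig expf_eq0; have := q_gt1; case: (q). Qed.


Lemma roots_card (P : {poly F}) : P != 0 -> (#|[set x | root P x]| < size P)%N.
Proof.
move=> P0; rewrite cardE; apply: max_poly_roots => //; last exact: enum_uniq.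
by apply/allP => x; rewrite mem_enum inE.
Qed.

Lemma card_le_img (T U : finType) (g : T -> U) m :
  (forall y, (#|[set x | g x == y]| <= m)%N) -> (#|T| <= #|g @: T| * m)%N.
Proof.
move=> H; have -> : #|T| = \sum_(x : T) 1 by rewrite sum1_card.
rewrite (partition_big g (fun y => y \in g @: T)) /=; last by move=> x _; apply: imset_f.
rewrite -sum_nat_const; apply: leq_sum => y _.
by rewrite sum1_card; apply: leq_trans (H y); rewrite cardsE.
Qed.

Definition nrm (x : F) := x * sig x.
Definition tr (x : F) := x + sig x.

Lemma nrm_fix x : sig (nrm x) = nrm x.
Proof. by rewrite /nrm sigM sigK mulrC. Qed.
Lemma tr_fix x : sig (tr x) = tr x.
Proof. by rewrite /tr sigD sigK addrC. Qed.

Lemma fix_card : (#|[set x : F | sig x == x]| <= q)%N.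
Proof.
have q1 := q_gt1.
have sz : size ('X^q - 'X : {poly F}) = q.+1.
  by rewrite size_addl ?size_polyXn // size_opp size_polyX ltnS.
have P0 : ('X^q - 'X : {poly F}) != 0 by rewrite -size_poly_gt0 sz.
have := roots_card P0; rewrite sz ltnS; apply: leq_trans; apply: subset_leq_card.
by apply/subsetP => x; rewrite !inE rootE !hornerE subr_eq0.
Qed.

Lemma img_fix (g : F -> F) m : (forall x, sig (g x) = g x) ->
  (forall y, (#|[set x | g x == y]| <= m)%N) ->
  (forall s, (q * q <= s * m)%N -> (q <= s)%N) ->
  forall y, sig y = y -> exists x, g x = y.
Proof.
move=> gfix Hm Hq y yfix.
have hc := card_le_img Hm.
have hFq : #|F| = (q * q)%N by rewrite hF mulnn.
rewrite hFq in hc.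
have sub : g @: F \subset [set x | sig x == x].
  by apply/subsetP => z /imsetP[x _ ->]; rewrite inE gfix.
have ge : (q <= #|g @: F|)%N by apply: Hq.
have eqS : g @: F = [set x | sig x == x].
  apply/eqP; rewrite eqEcard sub /=; apply: leq_trans fix_card ge.
have : y \in g @: F by rewrite eqS inE yfix.
by case/imsetP => x _ ->; exists x.
Qed.

Lemma nrm_surj y : sig y = y -> exists x, nrm x = y.
Proof.
have q1 := q_gt1.
apply: (@img_fix nrm q.+1); first exact: nrm_fix.
  move=> c.
  have sz : size ('X^(q.+1) - c%:P : {poly F}) = q.+2 by rewrite size_XnsubC.
  have P0 : ('X^(q.+1) - c%:P : {poly F}) != 0 by rewrite -size_poly_gt0 sz.
  have := roots_card P0; rewrite sz ltnS; apply: leq_trans; apply: subset_leq_card.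
  by apply/subsetP => x; rewrite !inE rootE !hornerE subr_eq0 /nrm /sig exprS.
move=> s hs; nia.
Qed.

Lemma tr_surj y : sig y = y -> exists x, tr x = y.
Proof.
have q1 := q_gt1.
apply: (@img_fix tr q); first exact: tr_fix.
  move=> c.
  have sz : size ('X^q + ('X - c%:P) : {poly F}) = q.+1.
    by rewrite size_addl ?size_polyXn // size_XsubC ltnS.
  have P0 : ('X^q + ('X - c%:P) : {poly F}) != 0 by rewrite -size_poly_gt0 sz.
  have := roots_card P0; rewrite sz ltnS; apply: leq_trans; apply: subset_leq_card.
  by apply/subsetP => x; rewrite !inE rootE !hornerE => /eqP <-; apply/eqP; rewrite /tr /sig /=; set a := x ^+ _; change (a + x - (x + a) = 0); rewrite [a + x]addrC subrr.
move=> s hs; nia.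
Qed.

Definition npre (y : F) : F := odflt 0 [pick x | nrm x == y].
Definition tpre (y : F) : F := odflt 0 [pick x | tr x == y].

Lemma npreP y : sig y = y -> nrm (npre y) = y.
Proof.
move=> /nrm_surj [x hx]; rewrite /npre; case: pickP => [z /eqP //|/(_ x)].
by rewrite hx eqxx.
Qed.

Lemma tpreP y : sig y = y -> tr (tpre y) = y.
Proof.
move=> /tr_surj [x hx]; rewrite /tpre; case: pickP => [z /eqP //|/(_ x)].
by rewrite hx eqxx.
Qed.

Lemma nrm_eq0 x : (nrm x == 0) = (x == 0).
Proof. by rewrite /nrm mulf_eq0 sig_eq0 orbb. Qed.
Lemma nrmM x y : nrm (x * y) = nrm x * nrm y.
Proof. by rewrite /nrm sigM; ring. Qed.
Lemma nrmV x : nrm (x^-1) = (nrm x)^-1.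
Proof. by rewrite /nrm sigV invfM. Qed.
Lemma nrm1 : nrm 1 = 1. Proof. by rewrite /nrm sig1 mulr1. Qed.
Lemma sig_nat m : sig m%:R = m%:R. Proof. exact: rmorph_nat. Qed.


Local Notation V := 'rV[F]_n.
Local Notation f := (@herm p k F n).

Lemma hermE (u v : V) : f u v = \sum_i u 0 i * sig (v 0 i).
Proof. by []. Qed.

Lemma hermDl u v w : f (u + v) w = f u w + f v w.
Proof. by rewrite !hermE -big_split; apply: eq_bigr => i _; rewrite mxE mulrDl. Qed.
Lemma hermZl a u v : f (a *: u) v = a * f u v.
Proof. by rewrite !hermE mulr_sumr; apply: eq_bigr => i _; rewrite mxE mulrA. Qed.
Lemma hermDr u v w : f u (v + w) = f u v + f u w.
Proof.
rewrite !hermE -big_split; apply: eq_bigr => i _.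
by rewrite mxE sigD mulrDr.
Qed.
Lemma hermZr a u v : f u (a *: v) = sig a * f u v.
Proof.
rewrite !hermE mulr_sumr; apply: eq_bigr => i _.
by rewrite mxE sigM mulrCA.
Qed.
Lemma hermNl u v : f (- u) v = - f u v.
Proof. by rewrite -scaleN1r hermZl mulN1r. Qed.
Lemma hermNr u v : f u (- v) = - f u v.
Proof. by rewrite -scaleN1r hermZr sigN sig1 mulN1r. Qed.
Lemma hermBl u v w : f (u - v) w = f u w - f v w.
Proof. by rewrite hermDl hermNl. Qed.
Lemma hermBr u v w : f u (v - w) = f u v - f u w.
Proof. by rewrite hermDr hermNr. Qed.
Lemma herm0l v : f 0 v = 0.
Proof. by rewrite -(scale0r 0) hermZl mul0r. Qed.
Lemma herm0r v : f v 0 = 0.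
Proof. by rewrite -(scale0r 0) hermZr sig0 mul0r. Qed.

Lemma hermC u v : f v u = sig (f u v).
Proof.
rewrite !hermE rmorph_sum; apply: eq_bigr => i _.
by rewrite rmorphM /= sigK mulrC.
Qed.

Lemma herm_fix v : sig (f v v) = f v v.
Proof. by rewrite -hermC. Qed.

Definition e (i : 'I_n) : V := delta_mx 0 i.

Lemma herm_el i v : f (e i) v = sig (v 0 i).
Proof.
rewrite hermE (bigD1 i) //= big1 => [|j /negbTE ji]; rewrite !mxE ?eqxx ?mul1r ?addr0 //.
by rewrite ji mul0r.
Qed.
Lemma herm_er i v : f v (e i) = v 0 i.
Proof. by rewrite hermC herm_el sigK. Qed.
Lemma herm_ee i j : f (e i) (e j) = (i == j)%:R.
Proof. by rewrite herm_er mxE eqxx /= eq_sym. Qed.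

Definition adj m l (M : 'M[F]_(m, l)) : 'M[F]_(l, m) := (map_mx sig M)^T.

Lemma hermM u v : f u v = (u *m adj v) 0 0.
Proof. by rewrite hermE mxE; apply: eq_bigr => i _; rewrite !mxE. Qed.

Definition unitary (A : 'M[F]_n) := A *m adj A = 1%:M.

Lemma unitary_herm A u v : unitary A -> f (u *m A) (v *m A) = f u v.
Proof.
move=> UA; rewrite !hermM /adj map_mxM trmx_mul mulmxA -(mulmxA u).
by rewrite -/(adj A) UA mulmx1.
Qed.

Lemma unitary_det A : unitary A -> nrm (\det A) = 1.
Proof.
move=> UA; have := congr1 determinant UA.
by rewrite det_mulmx /adj det_tr det_map_mx det1.
Qed.

Lemma unitary_entry (A : 'M[F]_n) i j : (A *m adj A) i j = f (row i A) (row j A).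
Proof. by rewrite hermE mxE; apply: eq_bigr => l _; rewrite !mxE. Qed.

Lemma hermSuml I (r : seq I) (P : pred I) (G : I -> V) v :
  f (\sum_(i <- r | P i) G i) v = \sum_(i <- r | P i) f (G i) v.
Proof. exact: (big_morph (fun u => f u v) (fun x y => hermDl x y v) (herm0l v)). Qed.



Lemma hermSumr I (r : seq I) (P : pred I) (G : I -> V) v :
  f v (\sum_(i <- r | P i) G i) = \sum_(i <- r | P i) f v (G i).
Proof.
rewrite hermC hermSuml rmorph_sum; apply: eq_bigr => i _; by rewrite [RHS]hermC.
Qed.

Definition ortho (s : seq V) := forall i j, (i < size s)%N -> (j < size s)%N ->
  f (nth 0 s i) (nth 0 s j) = (i == j)%:R.

Definition perp (s : seq V) (v : V) := forall i, (i < size s)%N -> f v (nth 0 s i) = 0.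

Lemma ker_nonzero (s : seq V) : (size s < n)%N ->
  exists2 w : V, w != 0 & perp s w.
Proof.
move=> hs; pose M : 'M[F]_(n, size s) := \matrix_(l, j) sig ((nth 0 s j) 0 l).
have rk : (0 < \rank (kermx M))%N.
  by rewrite mxrank_ker subn_gt0; apply: leq_ltn_trans (rank_leq_col M) hs.
have K0 : kermx M != 0 by rewrite -mxrank_eq0 -lt0n.
have [i Hi] : exists i, row i (kermx M) != 0.
  case: (pickP (fun i => row i (kermx M) != 0)) => [i Hi|H]; first by exists i.
  case/eqP: K0; apply/row_matrixP => i; rewrite row0; apply/eqP.
  by have := H i => /negbFE.
exists (row i (kermx M)) => // j hj.
have E : row i (kermx M) *m M = 0 by rewrite -row_mul mulmx_ker row0.
have := congr1 (fun X : 'M[F]_(1, size s) => X 0 (Ordinal hj)) E.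
rewrite mxE [RHS]mxE => <-; rewrite hermE; apply: eq_bigr => l _; rewrite !mxE //.
Qed.

Lemma sum_delta m (c : 'I_m -> F) j (hj : (j < m)%N) :
  \sum_(i < m) c i * ((i : nat) == j)%:R = c (Ordinal hj).
Proof.
rewrite (bigD1 (Ordinal hj)) //= eqxx mulr1 big1 ?addr0 // => i ne.
rewrite (_ : ((i : nat) == j) = false) ?mulr0 //; apply/negbTE; apply: contra ne => /eqP h.
by apply/eqP/val_inj.
Qed.

Definition proj (s : seq V) (z : V) :=
  z - \sum_(i < size s) f z (nth 0 s i) *: nth 0 s i.

Lemma proj_perp s z : ortho s -> perp s (proj s z).
Proof.
move=> os j hj; rewrite /proj hermBl hermSuml.
under eq_bigr => i _ do rewrite hermZl (os _ _ (ltn_ord i) hj).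
by rewrite sum_delta subrr.
Qed.

Lemma perp_proj s w z : perp s w -> f w (proj s z) = f w z.
Proof.
move=> pw; rewrite /proj hermBr hermSumr big1 ?subr0 // => i _.
by rewrite hermZr (pw _ (ltn_ord i)) mulr0.
Qed.

Lemma perp_lin s a b u v : perp s u -> perp s v -> perp s (a *: u + b *: v).
Proof. by move=> pu pv j hj; rewrite hermDl !hermZl pu // pv // !mulr0 addr0. Qed.

Lemma perp_Z s a u : perp s u -> perp s (a *: u).
Proof. by move=> pu j hj; rewrite hermZl pu // mulr0. Qed.

Lemma nz_coord (w : V) : w != 0 -> exists j, w 0 j != 0.
Proof.
move=> w0; case: (pickP (fun j => w 0 j != 0)) => [j Hj|H]; first by exists j.
case/eqP: w0; apply/rowP => j; rewrite mxE; apply/eqP.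
by have := H j => /negbFE.
Qed.

Lemma normalize (v : V) : f v v != 0 ->
  exists2 l, l != 0 & f (l *: v) (l *: v) = 1.
Proof.
move=> vv; set l := npre (f v v)^-1.
have hl : nrm l = (f v v)^-1 by apply: npreP; rewrite sigV herm_fix.
exists l; last by rewrite hermZl hermZr mulrA -/(nrm l) hl mulVf.
by rewrite -nrm_eq0 hl invr_eq0.
Qed.

Lemma ortho_ext s : ortho s -> (size s < n)%N -> exists v, ortho (rcons s v).
Proof.
move=> os hs; have [w w0 pw] := ker_nonzero hs.
have [j wj] := nz_coord w0.
set z := proj s (e j).
have pz : perp s z := proj_perp (e j) os.
have hwz : f w z != 0 by rewrite perp_proj // herm_er.
have [v pv vv] : exists2 v, perp s v & f v v != 0.
  case: (eqVneq (f w w) 0) => ww; last by exists w.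
  case: (eqVneq (f z z) 0) => zz; last by exists z.
  set c := f w z.
  have sc : sig c != 0 by rewrite sig_eq0.
  set mu := tpre 1 / sig c.
  exists (1 *: w + mu *: z); first exact: perp_lin.
  have e1 : mu * sig c = tpre 1 by rewrite /mu divfK.
  have e2 : sig mu * c = sig (tpre 1) by rewrite -e1 sigM sigK.
  rewrite scale1r !hermDl !hermDr !hermZl !hermZr ww zz [f z w]hermC -/c.
  rewrite mulr0 mulr0 add0r addr0 e2 e1 addrC.
  by rewrite (_ : tpre 1 + sig (tpre 1) = tr (tpre 1)) // tpreP ?sig1 // oner_neq0.
have [l l0 hl] := normalize vv.
exists (l *: v) => i j0; rewrite size_rcons !ltnS leq_eqVlt [(j0 <= _)%N]leq_eqVlt.
case/orP => [/eqP->|hi]; case/orP => [/eqP->|hj]; rewrite !nth_rcons ?ltnn ?eqxx ?hi ?hj //.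
- by rewrite hermZl pv // mulr0 gtn_eqF.
- by rewrite hermZr hermC pv // sig0 mulr0 ltn_eqF.
- exact: os.
Qed.

Lemma ortho_full s : ortho s -> (size s <= n)%N ->
  exists t, ortho (s ++ t) /\ size (s ++ t) = n.
Proof.
move=> os; move Hd: (n - size s)%N => d; elim: d s os Hd => [|d IH] s os Hd hs.
  exists [::]; rewrite cats0; split => //; apply/eqP; rewrite eqn_leq hs.
  by rewrite -subn_eq0 Hd.
have hs' : (size s < n)%N by rewrite -subn_gt0 Hd.
have [v ov] := ortho_ext os hs'.
have [||t [ot st]] := IH (rcons s v) ov; first by rewrite size_rcons subnS Hd.
  by rewrite size_rcons.
by exists (v :: t); rewrite -cat_rcons.
Qed.

Definition mxs (s : seq V) : 'M[F]_n := \matrix_(i, j) (nth 0 s i) 0 j.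

Lemma row_mxs s i : row i (mxs s) = nth 0 s i.
Proof. by apply/rowP => j; rewrite !mxE. Qed.

Lemma unitary_rows (A : 'M[F]_n) :
  (forall i j, f (row i A) (row j A) = (i == j)%:R) -> unitary A.
Proof. by move=> H; apply/matrixP => i j; rewrite unitary_entry H !mxE. Qed.

Lemma SU_of_ortho s : ortho s -> (size s < n)%N ->
  exists A, inSU p k A /\ forall i : 'I_n, (i < size s)%N -> row i A = nth 0 s i.
Proof.
move=> os hs; have [t [ot st]] := ortho_full os (ltnW hs).
set B := mxs (s ++ t).
have UB : unitary B.
  apply: unitary_rows => i j; rewrite !row_mxs ot ?st //.
have n0 : (0 < n)%N by apply: leq_ltn_trans hs.
have lt : (n.-1 < n)%N by rewrite ltn_predL.
set last := Ordinal lt.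
have dB : \det B != 0.
  by apply/eqP => h; have := unitary_det UB; rewrite h /nrm mul0r => /eqP; rewrite eq_sym oner_eq0.
set dl := (\det B)^-1.
set d : 'rV[F]_n := \row_j (if j == last then dl else 1).
have nd : forall j, nrm (d 0 j) = 1.
  by move=> j; rewrite mxE; case: ifP => _; rewrite ?nrm1 // nrmV unitary_det // invr1.
have rD : forall i, row i (diag_mx d *m B) = d 0 i *: row i B.
  by move=> i; rewrite row_mul row_diag_mx -scalemxAl -rowE.
have UD : unitary (diag_mx d *m B).
  apply: unitary_rows => i j; rewrite !rD hermZl hermZr !row_mxs ot ?st //.
  case: (eqVneq i j) => [->|ne]; last by move: ne; rewrite -val_eqE => /negbTE ->; rewrite !mulr0.
  by rewrite eqxx mulr1 -(nd j).
exists (diag_mx d *m B); split; first split.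
- by move=> u v; rewrite unitary_herm.
- rewrite det_mulmx det_diag (bigD1 last) //= big1 => [|i /negbTE ne]; last by rewrite mxE ne.
  by rewrite mxE eqxx mulr1 mulVf.
- move=> i hi; rewrite rD row_mxs nth_cat hi mxE.
  have -> : (i == last) = false.
    apply/negbTE/eqP => h; move: hi; rewrite h /=; move: hs n0; clear; lia.
  by rewrite scale1r.
Qed.

Lemma ortho2 u v : f u u = 1 -> f v v = 1 -> f v u = 0 -> ortho [:: u; v].
Proof.
move=> uu vv vu [|[|i]] [|[|j]] //= _ _; by rewrite ?uu ?vv ?vu // hermC vu sig0.
Qed.

Lemma ortho3 u v w : f u u = 1 -> f v v = 1 -> f w w = 1 ->
  f v u = 0 -> f w u = 0 -> f w v = 0 -> ortho [:: u; v; w].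
Proof.
move=> uu vv ww vu wu wv [|[|[|i]]] [|[|[|j]]] //= _ _;
  by rewrite ?uu ?vv ?ww ?vu ?wu ?wv // hermC ?vu ?wu ?wv sig0.
Qed.

Definition inv (a b : V) := nrm (f a b) / (f a a * f b b).

Lemma nrm_sig x : nrm (sig x) = nrm x.
Proof. by rewrite /nrm sigK mulrC. Qed.

Lemma inv_fix a b : sig (inv a b) = inv a b.
Proof. by rewrite /inv sigM sigV sigM nrm_fix !herm_fix. Qed.

Lemma inv_sym a b : inv a b = inv b a.
Proof. by rewrite /inv [f b a]hermC nrm_sig [f b b * _]mulrC. Qed.

Lemma inv_scale a b l m : l != 0 -> m != 0 -> f a a != 0 -> f b b != 0 ->
  inv (l *: a) (m *: b) = inv a b.
Proof.
move=> l0 m0 aa bb; rewrite /inv !hermZl !hermZr !nrmM nrm_sig.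
have nl : nrm l != 0 by rewrite nrm_eq0.
have nm : nrm m != 0 by rewrite nrm_eq0.
rewrite (mulrA l) (mulrA m) -/(nrm l) -/(nrm m).
move: nl nm aa bb; move: (nrm l) (nrm m) (nrm (f a b)) (f a a) (f b b) => x y z u w x0 y0 u0 w0.
by rewrite !invfM; field; rewrite x0 y0 u0 w0.
Qed.

Lemma inv_unitary A a b : unitary A -> inv (a *m A) (b *m A) = inv a b.
Proof. by move=> UA; rewrite /inv !unitary_herm. Qed.

Lemma nrm_N1 : nrm (-1) = 1.
Proof. by rewrite /nrm sigN sig1 mulrNN mulr1. Qed.

Hypothesis hn : (5 <= n)%N.

Definition oo (j : nat) (h : (j < 5)%N) : 'I_n := Ordinal (leq_trans h hn).
Definition o0 := oo (isT : (0 < 5)%N).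
Definition o1 := oo (isT : (1 < 5)%N).
Definition o2 := oo (isT : (2 < 5)%N).
Definition o3 := oo (isT : (3 < 5)%N).
Definition o4 := oo (isT : (4 < 5)%N).

Definition omega := npre (-1).

Lemma omegaP : nrm omega = -1.
Proof. by apply: npreP; rewrite sigN sig1. Qed.
Lemma omega0 : omega != 0.
Proof. by rewrite -nrm_eq0 omegaP oppr_eq0 oner_eq0. Qed.

Definition std (t : F) : V :=
  if t == 0 then e o1
  else if t^-1 - 1 == 0 then e o0 + e o1 + omega *: e o2
  else e o0 + npre (t^-1 - 1) *: e o1.

Lemma erow (A : 'M[F]_n) i : e i *m A = row i A.
Proof. by rewrite rowE. Qed.

Lemma herm_sym0 u v : f u v = 0 -> f v u = 0.
Proof. by move=> h; rewrite hermC h sig0. Qed.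

Lemma std_form a b : f a a != 0 -> f b b != 0 -> (forall c, b != c *: a) ->
  exists A, inSU p k A /\ exists l m, [/\ l != 0, m != 0,
    e o0 *m A = l *: a & std (inv a b) *m A = m *: b].
Proof.
move=> aa bb ind.
have [la la0 ha] := normalize aa; set a1 := la *: a in ha *.
have sla : sig la != 0 by rewrite sig_eq0.
set be := f b a1.
case: (eqVneq be 0) => be0.
  have fba : f b a = 0.
    by move: be0; rewrite /be /a1 hermZr => /eqP; rewrite mulf_eq0 (negbTE sla) => /eqP.
  have t0 : inv a b = 0 by rewrite /inv hermC fba sig0 /nrm !mul0r.
  have [lb lb0 hb] := normalize bb; set b1 := lb *: b in hb *.
  have o2s : ortho [:: a1; b1].
    by apply: ortho2 => //; rewrite /b1 hermZl -/be be0 mulr0.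
  have [|A [SA rA]] := SU_of_ortho o2s; first by apply: leq_trans hn.
  exists A; split => //; exists la, lb; split => //.
    by rewrite erow (rA o0).
  by rewrite t0 /std eqxx erow (rA o1).
set b2 := be^-1 *: b.
have hb2a : f b2 a1 = 1 by rewrite hermZl -/be mulVf.
have bb2 : f b2 b2 != 0.
  by rewrite hermZl hermZr !mulf_neq0 // ?invr_eq0 // sig_eq0 invr_eq0.
set b3 := b2 - a1.
have hb3a : f b3 a1 = 0 by rewrite hermBl hb2a ha subrr.
have hb3 : f b3 b3 = f b2 b2 - 1.
  by rewrite hermBl !hermBr hb2a ha [f a1 b2]hermC hb2a sig1 subrr subr0.
have tinv : inv a b = (f b2 b2)^-1.
  rewrite -(@inv_scale a b la be^-1) // ?invr_eq0 // -/a1 -/b2 /inv ha.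
  by rewrite [f a1 b2]hermC hb2a sig1 /nrm sig1 !mul1r.
have t0 : inv a b != 0 by rewrite tinv invr_eq0.
have ts : (inv a b)^-1 - 1 = f b3 b3 by rewrite tinv invrK hb3.
have be_b : b = be *: b2 by rewrite /b2 scalerA mulfV // scale1r.
case: (eqVneq (f b3 b3) 0) => s0; last first.
  set ls := npre (f b3 b3).
  have nls : nrm ls = f b3 b3 by apply: npreP; rewrite herm_fix.
  have ls0 : ls != 0 by rewrite -nrm_eq0 nls.
  set v2 := ls^-1 *: b3.
  have hv2 : f v2 v2 = 1.
    by rewrite hermZl hermZr mulrA -/(nrm _) nrmV nls mulVf.
  have hv2a : f v2 a1 = 0 by rewrite hermZl hb3a mulr0.
  have o2s : ortho [:: a1; v2] by apply: ortho2.
  have [|A [SA rA]] := SU_of_ortho o2s; first by apply: leq_trans hn.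
  exists A; split => //; exists la, be^-1; split => //; first by rewrite invr_eq0.
    by rewrite erow (rA o0).
  rewrite /std (negbTE t0) ts (negbTE s0) mulmxDl -scalemxAl !erow (rA o0) // (rA o1) //=.
  by rewrite /v2 scalerA mulfV // scale1r /b3 addrC subrK.
have b3n0 : b3 != 0.
  apply/eqP => h; have e2 : b2 = a1 by apply/eqP; rewrite -subr_eq0 -/b3 h.
  by move/eqP: (ind (be * la)); rewrite be_b e2 /a1 scalerA.
have [j hj] := nz_coord b3n0.
set z1 := e j - f (e j) a1 *: a1.
have hz1a : f z1 a1 = 0 by rewrite hermBl hermZl ha mulr1 subrr.
set c := f b3 z1.
have c0 : c != 0 by rewrite /c /z1 hermBr hermZr hb3a mulr0 subr0 herm_er.
set z := (sig c)^-1 *: z1.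
have hbz : f b3 z = 1 by rewrite hermZr sigV sigK -/c mulVf.
have hza : f z a1 = 0 by rewrite hermZl hz1a mulr0.
clearbody z.
set mu := tpre (1 - f z z).
have hmu : tr mu = 1 - f z z by apply: tpreP; rewrite sigB sig1 herm_fix.
set v2 := z + mu *: b3.
have hv2 : f v2 v2 = 1.
  rewrite hermDl !hermDr !hermZl !hermZr s0 [f z b3]hermC hbz sig1 !mulr0 !mulr1 addr0.
  have -> : f z z + sig mu + mu = f z z + tr mu by rewrite /tr; ring.
  by rewrite hmu addrC subrK.
have hbv2 : f b3 v2 = 1 by rewrite hermDr hermZr s0 mulr0 addr0 hbz.
have hv2a : f v2 a1 = 0 by rewrite hermDl hermZl hza hb3a mulr0 addr0.
clearbody v2.
set v3' := b3 - v2.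
have hv3'a : f v3' a1 = 0 by rewrite hermBl hb3a hv2a subrr.
have hv3'v2 : f v3' v2 = 0 by rewrite hermBl hbv2 hv2 subrr.
have hv3' : f v3' v3' = -1.
  rewrite /v3' (hermBl b3 v2) (hermBr b3 b3 v2) (hermBr v2 b3 v2).
  by rewrite s0 hbv2 [f v2 b3]hermC hbv2 sig1 hv2 subrr subr0 sub0r.
set v3 := omega^-1 *: v3'.
have hv3 : f v3 v3 = 1.
  by rewrite hermZl hermZr mulrA -/(nrm _) nrmV omegaP hv3' invrN1 mulrNN mulr1.
have hv3a : f v3 a1 = 0 by rewrite hermZl hv3'a mulr0.
have hv3v2 : f v3 v2 = 0 by rewrite hermZl hv3'v2 mulr0.
have o3s : ortho [:: a1; v2; v3] by apply: ortho3.
have [|A [SA rA]] := SU_of_ortho o3s; first by apply: leq_trans hn.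
exists A; split => //; exists la, be^-1; split => //; first by rewrite invr_eq0.
  by rewrite erow (rA o0).
rewrite /std (negbTE t0) ts s0 eqxx !mulmxDl -scalemxAl !erow (rA o0) // (rA o1) // (rA o2) //=.
rewrite /v3 scalerA mulfV ?omega0 // scale1r /v3' -addrA (addrC v2) subrK.
by rewrite /b3 addrC subrK.
Qed.

Lemma e_coord i j : (e i) 0 j = (i == j)%:R.
Proof. by rewrite mxE eqxx eq_sym. Qed.

Lemma oo_eq j j' (h : (j < 5)%N) (h' : (j' < 5)%N) : (oo h == oo h') = (j == j').
Proof. by rewrite -val_eqE. Qed.

Lemma std_props t : sig t = t ->
  [/\ f (std t) (std t) != 0, (std t) 0 o1 != 0, (std t) 0 o3 = 0 & (std t) 0 o4 = 0].
Proof.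
move=> tf; rewrite /std; case: (eqVneq t 0) => t0.
  by rewrite herm_ee !e_coord !oo_eq /= oner_eq0.
case: (eqVneq (t^-1 - 1) 0) => s0.
  rewrite !mxE !eqxx !oo_eq /=.
  rewrite !hermDl !hermDr !hermZl !hermZr !herm_ee !oo_eq /=.
  rewrite !mulr0 !mulr1 !addr0 !add0r -/(nrm omega) omegaP addrK oner_eq0.
  by split.
have sf : sig (t^-1 - 1) = t^-1 - 1 by rewrite sigB sigV tf sig1.
have nl := npreP sf.
rewrite !mxE !eqxx !oo_eq /=.
rewrite !hermDl !hermDr !hermZl !hermZr !herm_ee !oo_eq /=.
rewrite !mulr0 !mulr1 !addr0 !add0r -/(nrm _) nl; split => //.
- by rewrite addrC subrK invr_eq0.
- by rewrite -nrm_eq0 nl.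
Qed.

Lemma nrm0 : nrm 0 = 0. Proof. by rewrite /nrm mul0r. Qed.

Lemma exists_w t t' : sig t = t -> sig t' = t' ->
  exists w0, [/\ f w0 w0 != 0, inv (e o0) w0 = t, inv w0 (std t') = t & w0 0 o3 = 1].
Proof.
move=> tf t'f; have [dd d1 d3 d4] := std_props t'f.
move: (std t') dd d1 d3 d4 => d dd d1 d3 d4.
pose x1 : F := if t == 0 then 0 else 1.
pose K : F := if t == 0 then 1 else t^-1.
pose ga : F := if t == 0 then 0 else npre (f d d).
pose x2 := (ga - x1 * sig (d 0 o0)) / sig (d 0 o1).
pose r := K - nrm x1 - nrm x2 - 1.
have Kf : sig K = K by rewrite /K; case: ifP => _; rewrite ?sig1 ?sigV ?tf.
have K0 : K != 0 by rewrite /K; case: ifPn => t0; rewrite ?oner_eq0 ?invr_eq0.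
have rf : sig r = r by rewrite /r !sigB !nrm_fix Kf sig1.
pose x5 := npre r.
have n5 : nrm x5 = r := npreP rf.
exists (x1 *: e o0 + x2 *: e o1 + e o3 + x5 *: e o4).
have hww : f (x1 *: e o0 + x2 *: e o1 + e o3 + x5 *: e o4)
             (x1 *: e o0 + x2 *: e o1 + e o3 + x5 *: e o4) = K.
  rewrite !hermDl !hermDr !hermZl !hermZr !herm_ee !oo_eq /=.
  rewrite !mulr0 !mulr1 !addr0 !add0r.
  by change (nrm x1 + nrm x2 + 1 + nrm x5 = K); rewrite n5 /r; ring.
have he0 : f (e o0) (x1 *: e o0 + x2 *: e o1 + e o3 + x5 *: e o4) = sig x1.
  by rewrite herm_el !mxE !eqxx !oo_eq /= !mulr0 !mulr1 !addr0.
have d1' : sig (d 0 o1) != 0 by rewrite sig_eq0.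
have hwd : f (x1 *: e o0 + x2 *: e o1 + e o3 + x5 *: e o4) d = ga.
  rewrite !hermDl !hermZl !herm_el d3 d4 sig0 mulr0 !addr0 /x2 divfK //.
  by rewrite addrC subrK.
split.
- by rewrite hww.
- rewrite /inv he0 herm_ee eqxx hww nrm_sig mul1r /x1 /K.
  by case: ifPn => [/eqP -> | t0]; rewrite ?nrm0 ?mul0r ?nrm1 ?div1r ?invrK.
- rewrite /inv hwd hww /ga /K; case: ifPn => [/eqP -> | t0]; rewrite ?nrm0 ?mul0r //.
  by rewrite npreP ?herm_fix // invfM invrK mulrC divfK.
- by rewrite !mxE !eqxx !oo_eq /= !mulr0 !add0r addr0.
Qed.

Lemma span1_scale l (v : V) : l != 0 -> span1 (l *: v) = span1 v.
Proof.
move=> l0; apply/setP => u; apply/imsetP/imsetP => [[a _ ->]|[a _ ->]].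
  by exists (a * l); rewrite // scalerA.
by exists (a / l); rewrite // scalerA divfK.
Qed.

Lemma span1_img (A : 'M[F]_n) (v : V) :
  (fun u => u *m A) @: span1 v = span1 (v *m A).
Proof.
apply/setP => u; apply/imsetP/imsetP => [[z /imsetP[a _ ->] ->]|[a _ ->]].
  by exists a; rewrite // scalemxAl.
by exists (a *: v); [apply: imset_f | rewrite scalemxAl].
Qed.

Lemma mem_span1 (v : V) : v \in span1 v.
Proof. by apply/imsetP; exists 1; rewrite ?scale1r. Qed.

Lemma span1_eq (a b : V) : span1 a = span1 b -> exists c, b = c *: a.
Proof.
move=> h; have : b \in span1 a by rewrite h mem_span1.
by case/imsetP => c _ ->; exists c.
Qed.

Lemma pt_rep (x : Pt p k F n) : exists2 v : V, f v v != 0 & val x = span1 v.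
Proof.
by case: x => X /= /imsetP[v]; rewrite inE => vv ->; exists v.
Qed.

Lemma span1_Xset (v : V) : f v v != 0 -> span1 v \in Xset p k F n.
Proof. by move=> vv; apply/imsetP; exists v; rewrite ?inE. Qed.

Lemma inSU_unit (A : 'M[F]_n) : inSU p k A -> A \in unitmx.
Proof. by case=> _ d; rewrite unitmxE d unitr1. Qed.

Lemma inSU_mul (A B : 'M[F]_n) : inSU p k A -> inSU p k B -> inSU p k (A *m B).
Proof.
case=> hA dA [hB dB]; split; last by rewrite det_mulmx dA dB mulr1.
by move=> u v; rewrite !mulmxA hB hA.
Qed.

Lemma inSU_inv (A : 'M[F]_n) : inSU p k A -> inSU p k (invmx A).
Proof.
move=> SA; have uA := inSU_unit SA; case: SA => hA dA; split.
  by move=> u v; rewrite -hA !mulmxKV.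
by rewrite det_inv dA invr1.
Qed.

Lemma edge (G : {group {perm Pt p k F n}})
  (hGlow : forall A : 'M[F]_n, inSU p k A -> exists2 s, s \in G &
            forall x : Pt p k F n, val (s x) = (fun v => v *m A) @: val x)
  (x y u w : Pt p k F n) (a b c d : V) :
  val x = span1 a -> val y = span1 b -> val u = span1 c -> val w = span1 d ->
  f a a != 0 -> f b b != 0 -> f c c != 0 -> f d d != 0 ->
  (forall l, b != l *: a) -> (forall l, d != l *: c) -> inv a b = inv c d ->
  orbital G x y u w.
Proof.
move=> hx hy hu hw aa bb cc dd iab icd ie.
have [A1 [S1 [l1 [m1 [l10 m10 h1a h1b]]]]] := std_form aa bb iab.
have [A2 [S2 [l2 [m2 [l20 m20 h2a h2b]]]]] := std_form cc dd icd.
have U1 := inSU_unit S1.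
have [s sG hs] := hGlow _ (inSU_mul (inSU_inv S1) S2).
have eA : forall (v : V) (l : F) (z : V), l != 0 -> v *m A1 = l *: z ->
   z *m (invmx A1 *m A2) = l^-1 *: (v *m A2).
  move=> v l z l0 h; have : z = l^-1 *: (v *m A1) by rewrite h scalerA mulVf ?scale1r.
  by move=> ->; rewrite -scalemxAl mulmxA mulmxK.
have sx : s x = u.
  apply: val_inj; rewrite hs hx span1_img (eA _ _ _ l10 h1a) h2a scalerA hu.
  by rewrite span1_scale // mulf_neq0 ?invr_eq0.
have sy : s y = w.
  apply: val_inj; rewrite hs hy span1_img (eA _ _ _ m10 h1b) ie h2b scalerA hw.
  by rewrite span1_scale // mulf_neq0 ?invr_eq0.
rewrite /orbital; apply/orbitP; exists s => //.
by rewrite /= setactE imsetU1 imset_set1 /= !apermE sx sy.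
Qed.

Lemma inv_pres (A : 'M[F]_n) a b : (forall u v, f (u *m A) (v *m A) = f u v) ->
  inv (a *m A) (b *m A) = inv a b.
Proof. by move=> h; rewrite /inv !h. Qed.

Lemma inv_scalel a b l : l != 0 -> f a a != 0 -> f b b != 0 -> inv (l *: a) b = inv a b.
Proof. by move=> l0 aa bb; rewrite -{1}(scale1r b) inv_scale ?oner_eq0. Qed.
Lemma inv_scaler a b l : l != 0 -> f a a != 0 -> f b b != 0 -> inv a (l *: b) = inv a b.
Proof. by move=> l0 aa bb; rewrite -{1}(scale1r a) inv_scale ?oner_eq0. Qed.

Lemma indep_of (x y : Pt p k F n) (a b : V) : val x = span1 a -> val y = span1 b ->
  f b b != 0 -> x != y -> forall l, b != l *: a.
Proof.
move=> hx hy bb xy l; apply/eqP => hb; case/eqP: xy; apply: val_inj.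
have l0 : l != 0 by apply: contraNneq bb => l0; rewrite hb l0 scale0r herm0l.
by rewrite hx hy hb span1_scale.
Qed.

Lemma part1 (G : {group {perm Pt p k F n}})
  (hGlow : forall A : 'M[F]_n, inSU p k A -> exists2 s, s \in G &
            forall x : Pt p k F n, val (s x) = (fun v => v *m A) @: val x)
  (x y : Pt p k F n) : x != y -> diam_le (orbital G x y) 2.
Proof.
move=> xy u v.
case: (eqVneq u v) => [<-|uv]; first by exists [::].
have [a aa hx] := pt_rep x; have [b bb hy] := pt_rep y.
have [c cc hu] := pt_rep u; have [d dd hv] := pt_rep v.
have iab := indep_of hx hy bb xy; have icd := indep_of hu hv dd uv.
have [A [SA [l [m [l0 m0 hA hB]]]]] := std_form cc dd icd.
have [w0 [ww0 i1 i2 c3]] := exists_w (inv_fix a b) (inv_fix c d).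
have hSA := SA.1.
set wv := w0 *m A.
have wwv : f wv wv != 0 by rewrite /wv hSA.
have uA := inSU_unit SA.
have ec : c = l^-1 *: (e o0 *m A) by rewrite hA scalerA mulVf ?scale1r.
have ed : d = m^-1 *: (std (inv c d) *m A) by rewrite hB scalerA mulVf ?scale1r.
have canc : forall (z : V) (r : F), wv = r *: (z *m A) -> w0 = r *: z.
  move=> z r h; have := congr1 (fun X => X *m invmx A) h.
  by rewrite /wv -scalemxAl !mulmxK.
have iwc : forall r, wv != r *: c.
  move=> r; apply/eqP; rewrite ec scalerA => /canc h.
  by move: c3; rewrite h !mxE eqxx oo_eq /= mulr0 => /eqP; rewrite eq_sym oner_eq0.
have iwd : forall r, wv != r *: d.
  move=> r; apply/eqP; rewrite ed scalerA => /canc h.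
  have [_ _ s3 _] := std_props (inv_fix c d).
  by move: c3; rewrite h mxE s3 mulr0 => /eqP; rewrite eq_sym oner_eq0.
have idw : forall r, d != r *: wv.
  move=> r; apply/eqP => h.
  have r0 : r != 0 by apply: contraNneq dd => r0; rewrite h r0 scale0r herm0l.
  by case/eqP: (iwd r^-1); rewrite h scalerA mulVf ?scale1r.
have ivc : inv c wv = inv a b.
  rewrite ec inv_scalel ?invr_eq0 ?hSA ?herm_ee ?eqxx ?oner_eq0 //.
  by rewrite /wv inv_pres.
have ivd : inv wv d = inv a b.
  rewrite ed inv_scaler ?invr_eq0 ?hSA //; last first.
    by have [s1 _ _ _] := std_props (inv_fix c d).
  by rewrite /wv inv_pres.
pose wp : Pt p k F n := exist _ (span1 wv) (span1_Xset wwv).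
have hwp : val wp = span1 wv by [].
exists [:: wp; v]; split => //; split => //=.
rewrite (edge hGlow hx hy hu hwp aa bb cc wwv iab iwc) ?ivc //=.
by rewrite (edge hGlow hx hy hwp hv aa bb wwv dd iab idw) ?ivd.
Qed.

Lemma slmapZ (A : 'M[F]_n) i a (v : V) :
  slmap p A i (a *: v) = a ^+ (p ^ i) *: slmap p A i v.
Proof.
rewrite /slmap scalemxAl; congr (_ *m _); apply/rowP => j.
by rewrite !mxE exprMn.
Qed.

Lemma orth_img (A : 'M[F]_n) i (p1 q1 r s : V) : semisim p k A i -> f p1 q1 = 0 ->
  r \in slmap p A i @: span1 p1 -> s \in slmap p A i @: span1 q1 -> f r s = 0.
Proof.
case=> _ [lam _ hl] pq /imsetP[r' /imsetP[a _ ->] ->] /imsetP[s' /imsetP[b _ ->] ->].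
have pi0 : (p ^ i)%N != 0%N by rewrite -lt0n expn_gt0 prime_gt0.
by rewrite hl hermZl hermZr pq !mulr0 expr0n (negbTE pi0) mulr0.
Qed.

Definition wvec : V := if (2%:R : F) == 0 then e o0 + e o1 + e o2 else e o0 + e o1.

Lemma wvec_props : [/\ f wvec wvec != 0, f (e o0) wvec = 1, f wvec (e o0) = 1 &
  wvec 0 o1 = 1].
Proof.
have h01 : forall z : V, f (e o0) (e o0 + e o1 + z) = 1 + f (e o0) z.
  by move=> z; rewrite !hermDr !herm_ee oo_eq /= addr0.
rewrite /wvec; case: ifPn => h2.
  rewrite h01 herm_ee oo_eq /= addr0 [f _ (e o0)]hermC h01 herm_ee oo_eq /= addr0 sig1.
  rewrite !hermDl !hermDr !herm_ee !oo_eq /= !addr0 !add0r !mxE !eqxx !oo_eq /= add0r addr0.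
  split => //.
  by rewrite -mulr2n (eqP h2) add0r oner_eq0.
have e1 : f (e o0) (e o0 + e o1) = 1 by rewrite hermDr !herm_ee oo_eq /= addr0.
rewrite e1 [f _ (e o0)]hermC e1 sig1.
rewrite !hermDl !hermDr !herm_ee !oo_eq /= addr0 add0r !mxE !eqxx !oo_eq /= add0r.
by split.
Qed.

Lemma part2 (G : {group {perm Pt p k F n}})
  (hGup : forall s, s \in G -> exists A i, semisim p k A i /\
            forall x : Pt p k F n, val (s x) = slmap p A i @: val x) :
  exists x y : Pt p k F n, x != y /\ ~ diam_le (orbital G x y) 1.
Proof.
have [ww ew we w1] := wvec_props.
have e00 : f (e o0) (e o0) != 0 by rewrite herm_ee eqxx oner_eq0.
have e11 : f (e o1) (e o1) != 0 by rewrite herm_ee eqxx oner_eq0.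
pose X0 : Pt p k F n := exist (fun X => X \in Xset p k F n) _ (span1_Xset e00).
pose Y0 : Pt p k F n := exist (fun X => X \in Xset p k F n) _ (span1_Xset e11).
pose W : Pt p k F n := exist (fun X => X \in Xset p k F n) _ (span1_Xset ww).
have nco : forall (z : V) c, z 0 o1 = 1 -> z != c *: e o0.
  move=> z c h; apply/eqP => hz; move: h; rewrite hz !mxE oo_eq /= mulr0.
  by move/eqP; rewrite eq_sym oner_eq0.
have XY : X0 != Y0.
  apply/eqP => /(congr1 val) /= /span1_eq [c hc].
  have h1 : (e o1) 0 o1 = 1 by rewrite e_coord eqxx.
  by case/eqP: (nco (e o1) c h1).
have XW : X0 != W.
  apply/eqP => /(congr1 val) /= /span1_eq [c hc].
  by case/eqP: (nco _ c w1).
exists X0, Y0; split => // H.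
have [s [hs [hpath hlast]]] := H X0 W.
have EW : orbital G X0 Y0 X0 W.
  case: s hs hpath hlast => [|z [|]] //= _.
    by move=> _ h; case/eqP: XW.
  by rewrite andbT => h <-.
move: EW; rewrite /orbital => /orbitP [g gG].
rewrite /= setactE imsetU1 imset_set1 /= !apermE => hg.
have [A [i [SS hact]]] := hGup g gG.
have mX : X0 \in [set g X0; g Y0] by rewrite hg set21.
have mW : W \in [set g X0; g Y0] by rewrite hg set22.
have e0in : forall P : Pt p k F n, X0 = g P -> e o0 \in slmap p A i @: val P.
  by move=> P h; rewrite -hact -h mem_span1.
have win : forall P : Pt p k F n, W = g P -> wvec \in slmap p A i @: val P.
  by move=> P h; rewrite -hact -h mem_span1.
have f01 : f (e o0) (e o1) = 0 by rewrite herm_ee oo_eq.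
have f10 : f (e o1) (e o0) = 0 by rewrite herm_ee oo_eq.
case/set2P: mX => hX; case/set2P: mW => hW.
- by case/eqP: XW; rewrite hX hW.
- by move: ew; rewrite (orth_img SS f01 (e0in _ hX) (win _ hW)) => /eqP; rewrite eq_sym oner_eq0.
- by move: ew; rewrite (orth_img SS f10 (e0in _ hX) (win _ hW)) => /eqP; rewrite eq_sym oner_eq0.
- by case/eqP: XW; rewrite hX hW.
Qed.

End Field.

Unset Implicit Arguments.
Set Strict Implicit.

Theorem mainTheorem10 (p k n : nat) (F : finFieldType)
  (hp : prime p) (hk : (0 < k)%N) (hF : #|F| = ((p ^ k) ^ 2)%N) (hn : (5 <= n)%N)
  (G : {group {perm Pt p k F n}})
  (* G is induced on X by a subgroup of GammaU_n(q), i.e. G <= PGammaU_n(q) *)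
  (hGup : forall s, s \in G -> exists A i, semisim p k A i /\
            forall x : Pt p k F n, val (s x) = slmap p A i @: val x)
  (* G contains the permutation group PSU_n(q) induced by SU_n(q) on X *)
  (hGlow : forall A : 'M[F]_n, inSU p k A -> exists2 s, s \in G &
            forall x : Pt p k F n, val (s x) = (fun v => v *m A) @: val x)
  (hprim : [primitive G, on [set: Pt p k F n] | 'P]) :
  diamXG_eq G 2.
Proof.
split.
  by move=> x y xy; apply: (part1 hp hk hF hn hGlow xy).
exact: (part2 hp hk hF hn hGup).
Qed.
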